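(* Let $m,n\ge1$. Every $A\in\mathbb{R}^{m\times n}$ can be written as $A=B+C$ with $B,C\in\mathscr{L}_{m,n}$.
   Context: $\Vert\cdot\Vert$ is the supremum norm; a real $m\times n$ matrix $A$ is a Liouville matrix if $A\mathbf{q}-\mathbf{p}\neq\mathbf{0}$ for all nonzero $(\mathbf{q},\mathbf{p})\in\mathbb{Z}^n\times\mathbb{Z}^m$ and for every $N$ there exist $\mathbf{p}\in\mathbb{Z}^m$, $\mathbf{q}\in\mathbb{Z}^n\setminus\{\mathbf{0}\}$ with $\Vert A\mathbf{q}-\mathbf{p}\Vert<\Vert\mathbf{q}\Vert^{-N}$; $\mathscr{L}_{m,n}$ is the set of these. *)

(* Defs.v *)
From mathcomp Require Import all_boot all_order all_algebra.
From mathcomp Require Import reals.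
Set Implicit Arguments. Unset Strict Implicit. Unset Printing Implicit Defensive.
Import Order.TTheory GRing.Theory Num.Theory.
Local Open Scope ring_scope.

Definition supnorm (R : realType) (k : nat) (v : 'cV[R]_k) : R :=
  \big[Num.max/0]_(i < k) `|v i 0|.

Definition intvec (R : realType) (k : nat) (z : 'cV[int]_k) : 'cV[R]_k :=
  map_mx (fun x : int => x%:~R) z.

Definition liouville (R : realType) (m n : nat) (A : 'M[R]_(m, n)) : Prop :=
  (forall (q : 'cV[int]_n) (p : 'cV[int]_m),
      (q != 0) || (p != 0) -> A *m intvec R q - intvec R p != 0) /\
  (forall N : nat, exists (p : 'cV[int]_m) (q : 'cV[int]_n),
      q != 0 /\
      supnorm (A *m intvec R q - intvec R p) < (supnorm (intvec R q)) ^- N).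

(* Main.v *)
Require Import Defs.
From HB Require Import structures.
From mathcomp Require Import all_boot all_order all_algebra.
From mathcomp Require Import all_classical all_reals all_analysis.
From mathcomp Require Import ring lra.
Import Order.TTheory GRing.Theory Num.Theory.
Local Open Scope ring_scope.
Local Open Scope classical_set_scope.

HB.instance Definition _ (R : realType) m n := Complete.on 'M[R]_(m, n).

Section Aux.
Variable R : realType.
Variables m n : nat.

Definition closeM (M M' : 'M[R]_(m, n)) e := forall i j, `|M i j - M' i j| < e.

Lemma openM (S : set 'M[R]_(m, n)) :
  (forall M, S M -> exists2 e, 0 < e & forall M', closeM M M' e -> S M') -> @open ('M[R]_(m, n) : normedModType R) S.
Proof.
move=> H; rewrite openE => M SM; have [e e0 He] := H M SM.
apply/nbhs_ballP; exists e => // M' [_ HM]; apply: He => i j.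
by have := HM i j.
Qed.

Lemma openM_inv (S : set 'M[R]_(m, n)) M : @open ('M[R]_(m, n) : normedModType R) S -> S M ->
  exists2 e, 0 < e & forall M', closeM M M' e -> S M'.
Proof.
rewrite openE => oS SM; have /nbhs_ballP[e e0 He] := oS M SM.
exists e => // M' HM; apply: He; split => // i j.

Qed.

Lemma supnorm_ge0 k (v : 'cV[R]_k) : 0 <= supnorm v.
Proof. by rewrite /supnorm; elim/big_ind: _ => // x y; rewrite le_max => ->. Qed.

Lemma supnorm_le k (v : 'cV[R]_k) c : 0 <= c -> (forall i, `|v i 0| <= c) -> supnorm v <= c.
Proof. by move=> c0 H; rewrite /supnorm; apply: bigmax_le. Qed.

Lemma supnorm_lt k (v : 'cV[R]_k) c : 0 < c -> (forall i, `|v i 0| < c) -> supnorm v < c.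
Proof. by move=> c0 H; rewrite /supnorm; apply: bigmax_lt. Qed.

Lemma supnorm_ge k (v : 'cV[R]_k) i : `|v i 0| <= supnorm v.
Proof. by rewrite /supnorm; apply: le_bigmax. Qed.

Lemma mx_neq0 (T : zmodType) a b (M : 'M[T]_(a, b)) : M != 0 -> exists i j, M i j != 0.
Proof.
move=> HM; apply: contrapT => H; move/negP: HM; apply; apply/eqP/matrixP => i j.
rewrite mxE; apply/eqP/negPn/negP => Hij; apply: H; by exists i, j.
Qed.

Lemma entry_lip (M M' : 'M[R]_(m, n)) k (v : 'M[R]_(n, k)) e i l :
  closeM M M' e ->
  `|(M' *m v) i l - (M *m v) i l| <= e * \sum_j `|v j l|.
Proof.
move=> H; rewrite !mxE -sumrB mulr_sumr.
apply: le_trans (ler_norm_sum _ _ _) _; apply: ler_sum => j _.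
rewrite -mulrBl normrM ler_wpM2r //; apply: ltW; rewrite distrC; exact: H.
Qed.

Lemma intvec_eq0 k (p : 'cV[int]_k) : (intvec R p == 0) = (p == 0).
Proof.
apply/eqP/eqP => [H|->]; apply/matrixP => i j.
  by move/matrixP: H => /(_ i j); rewrite !mxE => /eqP; rewrite intr_eq0 => /eqP.
by rewrite !mxE.
Qed.

End Aux.

Section Sets.
Variable R : realType.
Variables m n : nat.
Hypothesis hm : (0 < m)%N.
Hypothesis hn : (0 < n)%N.
Notation MT := ('M[R]_(m, n) : normedModType R).

Definition H1 (q : 'cV[int]_n) (p : 'cV[int]_m) : set 'M[R]_(m, n) :=
  [set M | (q != 0) || (p != 0) -> M *m intvec R q - intvec R p != 0].

Definition H2 (N : nat) : set 'M[R]_(m, n) :=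
  [set M | exists (p : 'cV[int]_m) (q : 'cV[int]_n), q != 0 /\
      supnorm (M *m intvec R q - intvec R p) < (supnorm (intvec R q)) ^- N].

Lemma H1_open q p : @open MT (H1 q p).
Proof.
apply: openM => M HM.
have [c0|c1] := boolP ((q != 0) || (p != 0)); last first.
  by exists 1 => // M' _ c; rewrite c in c1.
have /mx_neq0[i [j Hij]] := HM c0.
set s := \sum_j0 `|intvec R q j0 j|.
set d := `|(M *m intvec R q - intvec R p) i j|.
have d0 : 0 < d by rewrite normr_gt0.
have s0 : 0 <= s by apply: sumr_ge0 => ? _.
exists (d / (s + 1)); first by apply: divr_gt0 => //; lra.
move=> M' HM' _; apply/negP => /eqP E.
have := @entry_lip R m n M M' 1 (intvec R q) _ i j HM'.
have es : d / (s + 1) * s = d - d / (s + 1) by field; lra.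
rewrite es.
have Eb : (M' *m intvec R q) i j = intvec R p i j.
  by move/matrixP: E => /(_ i j); rewrite !mxE => /eqP; rewrite subr_eq0 => /eqP.
rewrite Eb.
have -> : `|intvec R p i j - (M *m intvec R q) i j| = d by rewrite distrC /d !mxE.
have : d / (s + 1) > 0 by apply: divr_gt0 => //; lra.
lra.
Qed.


Lemma H2_open N : @open MT (H2 N).
Proof.
apply: openM => M [p [q [q0 HM]]].
set c := supnorm (intvec R q) ^- N in HM.
set g := supnorm (M *m intvec R q - intvec R p) in HM.
set s := \sum_j0 `|intvec R q j0 0|.
have g0 : 0 <= g by apply: supnorm_ge0.
have s0 : 0 <= s by apply: sumr_ge0 => ? _.
have ep : 0 < (c - g) / (s + 1) by apply: divr_gt0; lra.
exists ((c - g) / (s + 1)) => // M' HM'.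
exists p, q; split => //.
apply: supnorm_lt; first exact: (le_lt_trans g0 HM).
move=> i.
have := @entry_lip R m n M M' 1 (intvec R q) _ i 0 HM'.
have es : (c - g) / (s + 1) * s = (c - g) - (c - g) / (s + 1) by field; lra.
rewrite es.
have := @supnorm_ge R _ (M *m intvec R q - intvec R p) i.
rewrite -/g !mxE.
set a := \sum_j _; set b := \sum_j _; set r := (p i 0)%:~R.
move=> H1 H2.
have : `|b - r| <= `|a - r| + `|b - a|.
  have -> : b - r = (a - r) + (b - a) by ring.
  exact: ler_normD.
rewrite -/c; lra.
Qed.


Lemma intvec0 k : intvec R (0 : 'cV[int]_k) = 0.
Proof. by apply/eqP; rewrite intvec_eq0. Qed.

Lemma H1_dense q p : @dense MT (H1 q p).
Proof.
move=> O [M0 OM0] oO.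
have [e e0 He] := @openM_inv R m n O M0 oO OM0.
have [q0|qn0] := eqVneq q 0.
  exists M0; split => // c; rewrite q0 intvec0 mulmx0 sub0r oppr_eq0 intvec_eq0.
  by move: c; rewrite q0 eqxx.
have [j [k Hjk]] := @mx_neq0 _ _ _ q qn0.
case: (boolP (M0 *m intvec R q - intvec R p != 0)) => [h|].
  by exists M0; split => // _.
rewrite negbK => /eqP E.
pose i0 : 'I_m := Ordinal hm.
exists (M0 + (e/2) *: delta_mx i0 j); split.
  apply: He => i l; rewrite !mxE opprD addrA subrr sub0r normrN normrM.
  have e2 : `|e / 2| = e / 2 by rewrite ger0_norm //; lra.
  rewrite e2; case: (_ && _) => /=; rewrite ?normr1 ?normr0; lra.
move=> _; rewrite mulmxDl addrAC E add0r -scalemxAl.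
have : ((delta_mx i0 j) *m intvec R q) i0 k = (q j k)%:~R.
  rewrite mxE (bigD1 j) //= big1 => [|l /negbTE hl]; rewrite !mxE ?eqxx ?hl //=.
    by rewrite mul1r addr0.
  by rewrite mul0r.
move=> H; apply/negP => /eqP/matrixP/(_ i0 k); rewrite mxE H !mxE.
move=> /eqP; rewrite mulf_eq0 intr_eq0 (negbTE Hjk) orbF; lra.
Qed.


Lemma H2_dense N : @dense MT (H2 N).
Proof.
move=> O [M0 OM0] oO.
have [e e0 He] := @openM_inv R m n O M0 oO OM0.
pose j0 : 'I_n := Ordinal hn.
pose Q := Num.Def.archi_bound (e^-1).
have hQ : e^-1 < Q%:R by apply: archi_boundP; rewrite invr_ge0 ltW.
have Q0 : 0 < (Q%:R : R) by apply: lt_trans hQ; rewrite invr_gt0.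
have Q0n : (0 < Q)%N by rewrite -(ltr0n R).
have eQ : 1 < e * Q%:R.
  have : e * e^-1 < e * Q%:R by rewrite ltr_pM2l.
  by rewrite mulfV ?gt_eqF.
pose fl (i : 'I_m) := Num.floor (Q%:R * M0 i j0).
pose M := \matrix_(i, j) if j == j0 then (fl i)%:~R / Q%:R else M0 i j.
pose qz : 'cV[int]_n := \col_j (if j == j0 then (Q%:Z) else 0).
pose pz : 'cV[int]_m := \col_i fl i.
exists M; split.
  apply: He => i j; rewrite mxE; case: eqP => [->|_]; last by rewrite subrr normr0.
  have h1 := floor_le (Q%:R * M0 i j0).
  have h2 := floorD1_gt (Q%:R * M0 i j0).
  rewrite -/(fl i) intrD in h1 h2.
  have -> : M0 i j0 - (fl i)%:~R / Q%:R = (Q%:R * M0 i j0 - (fl i)%:~R) / Q%:R.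
    by field; rewrite gt_eqF.
  rewrite ger0_norm; last by apply: divr_ge0; lra.
  rewrite ltr_pdivrMr //; lra.
exists pz, qz; split.
  apply/negP => /eqP/matrixP/(_ j0 0); rewrite !mxE eqxx => /eqP.
  by move=> /eqP [] hQ0; rewrite hQ0 in Q0n.
have -> : M *m intvec R qz - intvec R pz = 0.
  apply/matrixP => i k; rewrite !mxE (bigD1 j0) //= big1 => [|j hj]; last first.
    by rewrite !mxE (negbTE hj) mulr0.
  by rewrite addr0 !mxE eqxx /= -mulrA pmulrn mulVf ?gt_eqF // mulr1 subrr.
have s0 : supnorm (0 : 'cV[R]_m) <= 0.
  by apply: supnorm_le => // i0; rewrite mxE normr0.
apply: (le_lt_trans s0); rewrite invr_gt0 exprn_gt0 //.
apply: (lt_le_trans _ (@supnorm_ge R _ (intvec R qz) j0)).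
by rewrite !mxE eqxx normr_gt0 intr_eq0 -lt0n Q0n.
Qed.


Lemma AAK (A X : 'M[R]_(m, n)) : A - (A - X) = X.
Proof. by rewrite opprB addrC subrK. Qed.

Lemma trans_open A S : @open MT S -> @open MT [set M | S (A - M)].
Proof.
move=> oS; apply: openM => M SM.
have [e e0 He] := @openM_inv R m n S _ oS SM.
exists e => // M' HM'; apply: He => i j; rewrite !mxE.
have -> : A i j - M i j - (A i j - M' i j) = - (M i j - M' i j) by ring.
by rewrite normrN.
Qed.

Lemma trans_dense A S : @dense MT S -> @dense MT [set M | S (A - M)].
Proof.
move=> dS O [M0 OM0] oO.
have oO' := @trans_open A O oO.
have h0 : [set M | O (A - M)] (A - M0) by rewrite /= AAK.
have [X [OX SX]] := dS _ (ex_intro _ _ h0) oO'.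
by exists (A - X); split => //=; rewrite AAK.
Qed.

End Sets.

Definition Idx m n := (bool * (('cV[int]_n * 'cV[int]_m) + nat))%type.

Definition Hs (R : realType) m n (s : ('cV[int]_n * 'cV[int]_m) + nat) : set 'M[R]_(m, n) :=
  match s with inl (q, p) => H1 R m n q p | inr N => H2 R m n N end.

Definition Gs (R : realType) m n (A : 'M[R]_(m, n)) (i : Idx m n) : set 'M[R]_(m, n) :=
  if i.1 then Hs R m n i.2 else [set M | Hs R m n i.2 (A - M)].

Definition Fs (R : realType) m n (A : 'M[R]_(m, n)) (k : nat) : set 'M[R]_(m, n) :=
  if unpickle k is Some i then Gs R m n A i else setT.

Local Close Scope classical_set_scope.

Theorem mainTheorem8 (R : realType) (m n : nat) (hm : (1 <= m)%N) (hn : (1 <= n)%N)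
  (A : 'M[R]_(m, n)) :
  exists B C : 'M[R]_(m, n), A = B + C /\ liouville B /\ liouville C.
Proof.
have odF : forall k, @open ('M[R]_(m, n) : normedModType R) (Fs R m n A k) /\
                      @dense ('M[R]_(m, n) : normedModType R) (Fs R m n A k).
  move=> k; rewrite /Fs; case: (unpickle k) => [[b s]|]; last first.
    by split; [exact: openT | move=> O O0 _; rewrite setIT].
  have oH : @open ('M[R]_(m, n) : normedModType R) (Hs R m n s).
    by case: s => [[q p]|N] /=; [exact: H1_open | exact: H2_open].
  have dH : @dense ('M[R]_(m, n) : normedModType R) (Hs R m n s).
    by clear oH; case: s => [[q p]|N] /=; [exact: H1_dense | exact: H2_dense].
  rewrite /Gs /=; case: b; first by split.
  by split; [exact: trans_open | exact: trans_dense].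
have := @Baire R ('M[R]_(m, n)) (Fs R m n A) odF setT (ex_intro _ 0 I) openT.
case=> B [_ HB].
have GB : forall i, Gs R m n A i B.
  by move=> i; have := HB (pickle i) I; rewrite /Fs pickleK.
exists B, (A - B); split; first by rewrite addrC subrK.
split; split.
- by move=> q p; apply: (GB (true, inl (q, p))).
- by move=> N; apply: (GB (true, inr N)).
- by move=> q p; apply: (GB (false, inl (q, p))).
- by move=> N; apply: (GB (false, inr N)).
Qed.
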